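(* Let $\mathcal{A}=\{1,\dots,L\}$, let $Q$ be a pmf on $\mathcal{A}$, let $f:\mathcal{A}\to\mathbb{R}$, and fix an integer $n\ge1$. For real $I$, let $\mathcal{S}_I=\{a^n\in\mathcal{A}^n: E_f(\pi(a^n))\le I\}$ and, whenever $Q^n(\mathcal{S}_I)>0$, define the pmf $P_I$ on $\mathcal{A}^n$ by $P_I(a^n)=Q^n(a^n)/Q^n(\mathcal{S}_I)$ for $a^n\in\mathcal{S}_I$ (and $0$ otherwise), and the average empirical pmf $\bar\pi_I=\sum_{a^n\in\mathcal{A}^n}P_I(a^n)\,\pi(a^n)$. Then $E_f(\bar\pi_I)$ is non-decreasing in $I$: for all $I_1\le I_2$ with $Q^n(\mathcal{S}_{I_1})>0$, we have $E_f(\bar\pi_{I_1})\le E_f(\bar\pi_{I_2})$.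
   Context: $Q^n$ is the iid pmf $Q^n(a^n)=\prod_{i=1}^nQ(a_i)$ and $Q^n(\mathcal{S})=\sum_{a^n\in\mathcal{S}}Q^n(a^n)$. For a pmf $P$ on $\mathcal{A}$, $E_f(P)=\sum_aP(a)f(a)$. The empirical pmf (type) of $a^n$ is $\pi(a^n)=\frac1n[n_1,\dots,n_L]$, where $n_i$ is the number of occurrences of letter $i$ in $a^n$; thus $E_f(\pi(a^n))=\frac1n\sum_{i=1}^nf(a_i)$. *)

(* Defs.v *)
From mathcomp Require Import all_boot all_order all_algebra.
Set Implicit Arguments. Unset Strict Implicit. Unset Printing Implicit Defensive.
Import Order.TTheory GRing.Theory Num.Theory.
Local Open Scope ring_scope.

(* Alphabet A = {1..L} is modelled by 'I_L; sequences a^n are n.-tuples. *)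
Section Defs.
Variables (R : realFieldType) (L n : nat).

Definition is_pmf (T : finType) (P : {ffun T -> R}) : Prop :=
  (forall a, 0 <= P a) /\ \sum_a P a = 1.

Definition iidpmf (Q : {ffun 'I_L -> R}) (x : n.-tuple 'I_L) : R :=
  \prod_(i < n) Q (tnth x i).

Definition iidmass (Q : {ffun 'I_L -> R}) (S : {set n.-tuple 'I_L}) : R :=
  \sum_(x in S) iidpmf Q x.

Definition Ef (f : 'I_L -> R) (P : {ffun 'I_L -> R}) : R :=
  \sum_a P a * f a.

Definition emp (x : n.-tuple 'I_L) : {ffun 'I_L -> R} :=
  [ffun a => (count_mem a x)%:R / n%:R].

Definition SI (f : 'I_L -> R) (I : R) : {set n.-tuple 'I_L} :=
  [set x | Ef f (emp x) <= I].

Definition PI (Q : {ffun 'I_L -> R}) (f : 'I_L -> R) (I : R)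
  : {ffun n.-tuple 'I_L -> R} :=
  [ffun x => if x \in SI f I then iidpmf Q x / iidmass Q (SI f I) else 0].

Definition avgemp (Q : {ffun 'I_L -> R}) (f : 'I_L -> R) (I : R)
  : {ffun 'I_L -> R} :=
  [ffun a => \sum_(x : n.-tuple 'I_L) PI Q f I x * emp x a].

End Defs.

Arguments iidpmf {R L} n Q x.
Arguments iidmass {R L} n Q S.
Arguments emp {R L} n x.
Arguments SI {R L} n f I.
Arguments PI {R L} n Q f I.
Arguments avgemp {R L} n Q f I.
Arguments Ef {R L} f P.
Arguments is_pmf {R T} P.

(* Main.v *)
Require Import Defs.
From mathcomp Require Import all_boot all_order all_algebra.
Import Order.TTheory GRing.Theory Num.Theory.
Local Open Scope ring_scope.

Lemma EfE (R : realFieldType) (L n : nat) (Q : {ffun 'I_L -> R})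
  (f : 'I_L -> R) I :
  Ef f (avgemp n Q f I) = (\sum_(x in SI n f I) iidpmf n Q x * Ef f (emp n x))
     / iidmass n Q (SI n f I).
Proof.
rewrite /Ef big_distrl /=.
under eq_bigr => a _ do rewrite ffunE big_distrl /=.
rewrite exchange_big /= [RHS]big_mkcond /=. apply: eq_bigr => x _.
under eq_bigr do rewrite -mulrA.
rewrite -big_distrr /= ffunE; case: ifP => _; last by rewrite !mul0r.
by rewrite mulrAC.
Qed.

Theorem lemma3 (R : realFieldType) (L n : nat) (Q : {ffun 'I_L -> R})
  (f : 'I_L -> R) (I1 I2 : R) :
  is_pmf Q -> (1 <= n)%N -> I1 <= I2 ->
  0 < iidmass n Q (SI n f I1) ->
  Ef f (avgemp n Q f I1) <= Ef f (avgemp n Q f I2).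
Proof.
move=> [Q0 _] _ hI m1pos.
rewrite !EfE.
set S1 := SI n f I1; set S2 := SI n f I2.
set w := iidpmf n Q; set g := fun x => Ef f (emp n x).
have w0 x : 0 <= w x by apply: prodr_ge0 => i _.
have sub : S1 \subset S2.
  by apply/subsetP => x; rewrite !inE => /le_trans; apply.
have split (h : n.-tuple 'I_L -> R) : \sum_(x in S2) h x = \sum_(x in S1) h x + \sum_(x in S2 :\: S1) h x.
  by rewrite (big_setID S1) /= (setIidPr sub).
set m1 := iidmass n Q S1 in m1pos *.
have m2pos : 0 < iidmass n Q S2.
  rewrite /iidmass split; apply: (lt_le_trans m1pos).
  by rewrite lerDl; apply: sumr_ge0 => x _.
set c := (\sum_(x in S1) w x * g x) / m1.
have cI : c <= I1.
  rewrite /c ler_pdivrMr //.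
  rewrite /m1 /iidmass big_distrr /=; apply: ler_sum => x.
  rewrite inE => hx; rewrite [I1 * _]mulrC; exact: (ler_wpM2l (w0 x)).
rewrite -/c ler_pdivlMr //.
rewrite -subr_ge0 /iidmass !split mulrDr opprD.
have E : \sum_(x in S1) w x * g x - c * \sum_(x in S1) w x = 0.
  by rewrite /c /m1 /iidmass -mulrA mulVf ?mulr1 ?subrr // gt_eqF.
rewrite -!addrA (addrCA (\sum_(x in S2 :\: S1) _)) addrA E add0r big_distrr -sumrB /=; apply: sumr_ge0 => x.
rewrite !inE => /andP [hx _]; rewrite [c * _]mulrC -mulrBr; apply: mulr_ge0 => //.
rewrite subr_ge0; apply: (le_trans cI); rewrite ltW //.
by rewrite ltNge.
Qed.
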